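(* Let $\omega:\mathbb N\to[1,\infty)$ be an unbounded weight on $\mathbb N_{\min}$. Then $(\ell^1_\omega(\mathbb N_{\min}),M_2(\mathbb C))$ is not a uniformly AMNM pair.
   Context: $\mathbb N_{\min}$ is the semilattice $\mathbb N$ with product $\min$; every $\omega:\mathbb N\to[1,\infty)$ is a submultiplicative weight on it. $\ell^1_\omega(\mathbb N_{\min})$ is the Banach space of $a:\mathbb N\to\mathbb C$ with $\|a\|=\sum_n|a(n)|\omega(n)<\infty$, with convolution $\delta_m*\delta_n=\delta_{\min(m,n)}$. $M_2(\mathbb C)$ has the operator norm. For a bounded linear $T:A\to B$ between Banach algebras, $\operatorname{def}(T)=\sup\{\|T(xy)-T(x)T(y)\|:\|x\|,\|y\|\le1\}$ and $\operatorname{Mult}(A,B)$ is the set of bounded multiplicative linear maps (including $0$). $(A,B)$ is a uniformly AMNM pair if for every $\varepsilon>0$ there is $\delta>0$ such that every bounded linear $T:A\to B$ with $\operatorname{def}(T)\le\delta$ satisfies $\operatorname{dist}(T,\operatorname{Mult}(A,B))\le\varepsilon$ in operator norm. *)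

(* Defs.v *)
From Stdlib Require Import Reals Lra ClassicalEpsilon.
Open Scope R_scope.

Definition C : Type := (R * R)%type.
Definition C0 : C := (0, 0).
Definition Cadd (z w : C) : C := (fst z + fst w, snd z + snd w).
Definition Copp (z : C) : C := (- fst z, - snd z).
Definition Csub (z w : C) : C := Cadd z (Copp w).
Definition Cmul (z w : C) : C :=
  (fst z * fst w - snd z * snd w, fst z * snd w + snd z * fst w).
Definition Cmod (z : C) : R := sqrt (fst z ^ 2 + snd z ^ 2).

Definition is_glb (E : R -> Prop) (m : R) : Prop :=
  (forall x, E x -> m <= x) /\ (forall b, (forall x, E x -> b <= x) -> b <= m).
(* supremum of a nonempty bounded-above set (junk value otherwise) *)
Definition Rsup (E : R -> Prop) : R := epsilon (inhabits 0) (is_lub E).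
(* infimum of a nonempty bounded-below set (junk value otherwise) *)
Definition Rinf (E : R -> Prop) : R := epsilon (inhabits 0) (is_glb E).
Definition Rseries (u : nat -> R) : R := epsilon (inhabits 0) (infinite_sum u).
Definition Cseries (u : nat -> C) : C :=
  (Rseries (fun n => fst (u n)), Rseries (fun n => snd (u n))).

Definition C2 : Type := (C * C)%type.
Definition C2norm (v : C2) : R := sqrt (Cmod (fst v) ^ 2 + Cmod (snd v) ^ 2).
(* a matrix ((a,b),(c,d)) = [[a b];[c d]] *)
Definition M2 : Type := ((C * C) * (C * C))%type.
Definition M2zero : M2 := ((C0, C0), (C0, C0)).
Definition M2app (A : M2) (v : C2) : C2 :=
  (Cadd (Cmul (fst (fst A)) (fst v)) (Cmul (snd (fst A)) (snd v)),
   Cadd (Cmul (fst (snd A)) (fst v)) (Cmul (snd (snd A)) (snd v))).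
Definition M2add (A B : M2) : M2 :=
  ((Cadd (fst (fst A)) (fst (fst B)), Cadd (snd (fst A)) (snd (fst B))),
   (Cadd (fst (snd A)) (fst (snd B)), Cadd (snd (snd A)) (snd (snd B)))).
Definition M2scale (c : C) (A : M2) : M2 :=
  ((Cmul c (fst (fst A)), Cmul c (snd (fst A))),
   (Cmul c (fst (snd A)), Cmul c (snd (snd A)))).
Definition M2sub (A B : M2) : M2 := M2add A (M2scale (Copp (1, 0)) B).
Definition M2mul (A B : M2) : M2 :=
  let a := fst (fst A) in let b := snd (fst A) in
  let c := fst (snd A) in let d := snd (snd A) in
  let e := fst (fst B) in let f := snd (fst B) in
  let g := fst (snd B) in let h := snd (snd B) in
  ((Cadd (Cmul a e) (Cmul b g), Cadd (Cmul a f) (Cmul b h)),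
   (Cadd (Cmul c e) (Cmul d g), Cadd (Cmul c f) (Cmul d h))).
Definition M2norm (A : M2) : R :=
  Rsup (fun r => exists v : C2, C2norm v <= 1 /\ r = C2norm (M2app A v)).

Definition is_weight (omega : nat -> R) : Prop := forall n, 1 <= omega n.
Definition unbounded (omega : nat -> R) : Prop := forall M, exists n, M < omega n.

Definition in_l1w (omega : nat -> R) (a : nat -> C) : Prop :=
  exists l, infinite_sum (fun n => Cmod (a n) * omega n) l.
Definition l1w_norm (omega : nat -> R) (a : nat -> C) : R :=
  Rseries (fun n => Cmod (a n) * omega n).
Definition seq_add (a b : nat -> C) : nat -> C := fun n => Cadd (a n) (b n).
Definition seq_scale (c : C) (a : nat -> C) : nat -> C := fun n => Cmul c (a n).
Definition Ctail (u : nat -> C) (k : nat) : C := Cseries (fun j => u (k + j)%nat).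
(* convolution on N_min, the continuous bilinear extension of
   delta_m * delta_n = delta_(min m n):
   (a*b)(k) = sum_{min(m,n)=k} a m b n
            = a k * sum_{n>=k} b n + b k * sum_{m>k} a m *)
Definition conv_min (a b : nat -> C) : nat -> C :=
  fun k => Cadd (Cmul (a k) (Ctail b k)) (Cmul (b k) (Ctail a (S k))).

Definition bounded_linear (omega : nat -> R) (T : (nat -> C) -> M2) : Prop :=
  (forall a b, in_l1w omega a -> in_l1w omega b ->
     T (seq_add a b) = M2add (T a) (T b)) /\
  (forall c a, in_l1w omega a -> T (seq_scale c a) = M2scale c (T a)) /\
  (exists K, forall a, in_l1w omega a -> M2norm (T a) <= K * l1w_norm omega a).

Definition opnorm (omega : nat -> R) (T : (nat -> C) -> M2) : R :=
  Rsup (fun r => exists a, in_l1w omega a /\ l1w_norm omega a <= 1 /\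
                           r = M2norm (T a)).

Definition defect (omega : nat -> R) (T : (nat -> C) -> M2) : R :=
  Rsup (fun r => exists x y, in_l1w omega x /\ in_l1w omega y /\
          l1w_norm omega x <= 1 /\ l1w_norm omega y <= 1 /\
          r = M2norm (M2sub (T (conv_min x y)) (M2mul (T x) (T y)))).

(* Mult(A,B): bounded multiplicative linear maps (including 0) *)
Definition is_mult (omega : nat -> R) (S : (nat -> C) -> M2) : Prop :=
  bounded_linear omega S /\
  forall a b, in_l1w omega a -> in_l1w omega b ->
    S (conv_min a b) = M2mul (S a) (S b).

Definition dist_mult (omega : nat -> R) (T : (nat -> C) -> M2) : R :=
  Rinf (fun r => exists S, is_mult omega S /\
                 r = opnorm omega (fun a => M2sub (T a) (S a))).

Definition uniformly_AMNM (omega : nat -> R) : Prop :=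
  forall eps, 0 < eps -> exists delta, 0 < delta /\
    forall T, bounded_linear omega T -> defect omega T <= delta ->
      dist_mult omega T <= eps.

(* Main.v *)
Require Import Defs.
From Stdlib Require Import Reals Lra Lia Psatz FunctionalExtensionality ClassicalEpsilon.
From Coquelicot Require Import Rcomplements Rbar Lim_seq Series Hierarchy.
Import Defs.
Open Scope R_scope.

Definition C1 : C := (1, 0).
Lemma Cring : ring_theory C0 C1 Cadd Cmul Csub Copp (@eq C).
Proof.
  constructor; intros; repeat match goal with z : C |- _ => destruct z end;
  unfold C0, C1, Cadd, Cmul, Csub, Copp; simpl.
  all: try (apply f_equal2; ring).
  all: reflexivity.
Qed.
Add Ring Cring : Cring.

Definition rc (x : R) : C := (x, 0).

Lemma sqrt_le_r x t : 0 <= t -> x <= t * t -> sqrt x <= t.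
Proof.
  intros Ht Hx. rewrite <- (sqrt_square t Ht). apply sqrt_le_1_alt. exact Hx.
Qed.

Lemma Cmod_ge0 z : 0 <= Cmod z.
Proof. unfold Cmod. apply sqrt_pos. Qed.

Lemma Cmod_mul z w : Cmod (Cmul z w) = Cmod z * Cmod w.
Proof.
  destruct z as [a b], w as [c d]. unfold Cmod, Cmul; cbn [fst snd].
  rewrite <- sqrt_mult by nra. f_equal. ring.
Qed.

Lemma Cmod_fst z : Rabs (fst z) <= Cmod z.
Proof.
  destruct z as [a b]; unfold Cmod; cbn [fst snd].
  rewrite <- sqrt_Rsqr_abs. apply sqrt_le_1_alt. unfold Rsqr. nra.
Qed.

Lemma Cmod_snd z : Rabs (snd z) <= Cmod z.
Proof.
  destruct z as [a b]; unfold Cmod; cbn [fst snd].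
  rewrite <- sqrt_Rsqr_abs. apply sqrt_le_1_alt. unfold Rsqr. nra.
Qed.

Lemma Cmod_le_comp z : Cmod z <= Rabs (fst z) + Rabs (snd z).
Proof.
  destruct z as [a b]; unfold Cmod; cbn [fst snd].
  apply sqrt_le_r. pose proof (Rabs_pos a); pose proof (Rabs_pos b); lra.
  pose proof (Rabs_pos a); pose proof (Rabs_pos b).
  assert (a^2 = Rabs a * Rabs a) by (pose proof (Rsqr_abs a) as E; unfold Rsqr in E; nra).
  assert (b^2 = Rabs b * Rabs b) by (pose proof (Rsqr_abs b) as E; unfold Rsqr in E; nra).
  nra.
Qed.

Lemma Cmod_add z w : Cmod (Cadd z w) <= Cmod z + Cmod w.
Proof.
  destruct z as [a b], w as [c d]. unfold Cmod, Cadd; cbn [fst snd].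
  apply sqrt_le_r. pose proof (sqrt_pos (a^2+b^2)); pose proof (sqrt_pos (c^2+d^2)); lra.
  assert (HS: a*c + b*d <= sqrt (a^2+b^2) * sqrt (c^2+d^2)).
  { rewrite <- sqrt_mult by nra.
    destruct (Rle_dec (a*c+b*d) 0). apply Rle_trans with 0; auto; apply sqrt_pos.
    rewrite <- (sqrt_square (a*c+b*d)) by lra. apply sqrt_le_1_alt. pose proof (pow2_ge_0 (a*d-b*c)). nra. }
  pose proof (sqrt_sqrt (a^2+b^2)); pose proof (sqrt_sqrt (c^2+d^2)).
  assert (0 <= a^2+b^2) by nra. assert (0 <= c^2+d^2) by nra.
  specialize (H H1); specialize (H0 H2). nra.
Qed.

Lemma Cmod_rc x : Cmod (rc x) = Rabs x.
Proof.
  unfold Cmod, rc; cbn [fst snd]. rewrite <- sqrt_Rsqr_abs. f_equal. unfold Rsqr; ring.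
Qed.

Lemma Cmod_opp z : Cmod (Copp z) = Cmod z.
Proof. destruct z; unfold Cmod, Copp; cbn [fst snd]; f_equal; ring. Qed.

Lemma Cmod_C0 : Cmod C0 = 0.
Proof. unfold Cmod, C0; cbn [fst snd]. replace (0^2+0^2) with 0 by ring. apply sqrt_0. Qed.

Lemma Cmod_C1 : Cmod C1 = 1.
Proof. unfold Cmod, C1; cbn [fst snd]. replace (1^2+0^2) with 1 by ring. apply sqrt_1. Qed.

Lemma Cmod_sub z w : Cmod (Csub z w) <= Cmod z + Cmod w.
Proof. unfold Csub. rewrite <- (Cmod_opp w). apply Cmod_add. Qed.

Lemma Cmod_tri z w u : Cmod (Csub z u) <= Cmod (Csub z w) + Cmod (Csub w u).
Proof.
  replace (Csub z u) with (Cadd (Csub z w) (Csub w u)) by ring. apply Cmod_add.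
Qed.

Lemma Cmod_sym z w : Cmod (Csub z w) = Cmod (Csub w z).
Proof. replace (Csub z w) with (Copp (Csub w z)) by ring. apply Cmod_opp. Qed.

Lemma Rsup_lub (E : R -> Prop) : bound E -> (exists x, E x) -> is_lub E (Rsup E).
Proof.
  intros Hb Hn. destruct (completeness E Hb Hn) as [m Hm].
  unfold Rsup. apply epsilon_spec. exists m; exact Hm.
Qed.

Lemma Rsup_le (E : R -> Prop) b : (exists x, E x) -> (forall x, E x -> x <= b) -> Rsup E <= b.
Proof.
  intros Hn Hb. assert (bound E) by (exists b; exact Hb).
  destruct (Rsup_lub E H Hn) as [_ H2]. apply H2. exact Hb.
Qed.

Lemma Rsup_ge (E : R -> Prop) x : bound E -> E x -> x <= Rsup E.
Proof.
  intros Hb Hx. destruct (Rsup_lub E Hb (ex_intro _ x Hx)) as [H1 _]. apply H1; auto.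
Qed.

Lemma Rinf_ge (E : R -> Prop) b : (exists x, E x) -> (forall x, E x -> b <= x) -> b <= Rinf E.
Proof.
  intros [x0 Hx0] Hb.
  set (F := fun y => E (- y)).
  assert (HF : bound F). { exists (- b). intros y Hy. specialize (Hb _ Hy). lra. }
  assert (HFn : exists y, F y). { exists (- x0). unfold F. rewrite Ropp_involutive. auto. }
  destruct (completeness F HF HFn) as [m [Hm1 Hm2]].
  assert (Hg : Defs.is_glb E (- m)).
  { split.
    - intros x Hx. assert (F (- x)) by (unfold F; rewrite Ropp_involutive; auto).
      specialize (Hm1 _ H). lra.
    - intros b' Hb'. assert (m <= - b').
      { apply Hm2. intros y Hy. specialize (Hb' _ Hy). lra. } lra. }
  unfold Rinf.
  assert (Hs : Defs.is_glb E (epsilon (inhabits 0) (Defs.is_glb E))) by (apply epsilon_spec; eauto).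
  destruct Hs as [_ Hs2]. apply Hs2. exact Hb.
Qed.

Lemma le_sqrt_r x y : 0 <= x -> x * x <= y -> x <= sqrt y.
Proof. intros H1 H2. rewrite <- (sqrt_square x H1). apply sqrt_le_1_alt. exact H2. Qed.

Definition m11 (M : M2) := fst (fst M).
Definition m12 (M : M2) := snd (fst M).
Definition m21 (M : M2) := fst (snd M).
Definition m22 (M : M2) := snd (snd M).
Definition m1 (M : M2) : R := Cmod (m11 M) + Cmod (m12 M) + Cmod (m21 M) + Cmod (m22 M).

Lemma C2norm_ge_fst v : Cmod (fst v) <= C2norm v.
Proof.
  unfold C2norm. apply le_sqrt_r. apply Cmod_ge0. pose proof (pow2_ge_0 (Cmod (snd v))). nra.
Qed.
Lemma C2norm_ge_snd v : Cmod (snd v) <= C2norm v.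
Proof.
  unfold C2norm. apply le_sqrt_r. apply Cmod_ge0. pose proof (pow2_ge_0 (Cmod (fst v))). nra.
Qed.
Lemma C2norm_le v : C2norm v <= Cmod (fst v) + Cmod (snd v).
Proof.
  unfold C2norm. pose proof (Cmod_ge0 (fst v)); pose proof (Cmod_ge0 (snd v)).
  apply sqrt_le_r. lra. simpl. nra.
Qed.

Lemma C2app_bound M v : C2norm v <= 1 -> C2norm (M2app M v) <= m1 M.
Proof.
  intros Hv. pose proof (C2norm_ge_fst v); pose proof (C2norm_ge_snd v).
  pose proof (Cmod_ge0 (fst v)); pose proof (Cmod_ge0 (snd v)).
  eapply Rle_trans. apply C2norm_le. unfold M2app, m1, m11, m12, m21, m22. cbn [fst snd].
  destruct M as [[a b] [c d]]. cbn [fst snd].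
  pose proof (Cmod_ge0 a); pose proof (Cmod_ge0 b); pose proof (Cmod_ge0 c); pose proof (Cmod_ge0 d).
  pose proof (Cmod_add (Cmul a (fst v)) (Cmul b (snd v))).
  pose proof (Cmod_add (Cmul c (fst v)) (Cmul d (snd v))).
  rewrite !Cmod_mul in *. nra.
Qed.

Lemma M2norm_lub M : is_lub (fun r => exists v : C2, C2norm v <= 1 /\ r = C2norm (M2app M v)) (M2norm M).
Proof.
  apply Rsup_lub.
  - exists (m1 M). intros r [v [Hv ->]]. apply C2app_bound; auto.
  - exists (C2norm (M2app M (C0, C0))). exists (C0, C0). split; auto.
    unfold C2norm; cbn [fst snd]. rewrite Cmod_C0. replace (0^2+0^2) with 0 by ring. rewrite sqrt_0. lra.
Qed.

Lemma M2norm_le M : M2norm M <= m1 M.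
Proof.
  destruct (M2norm_lub M) as [_ H]. apply H. intros r [v [Hv ->]]. apply C2app_bound; auto.
Qed.

Lemma C2norm_e1 : C2norm (C1, C0) = 1.
Proof. unfold C2norm; cbn [fst snd]. rewrite Cmod_C1, Cmod_C0. replace (1^2+0^2) with 1 by ring. apply sqrt_1. Qed.
Lemma C2norm_e2 : C2norm (C0, C1) = 1.
Proof. unfold C2norm; cbn [fst snd]. rewrite Cmod_C1, Cmod_C0. replace (0^2+1^2) with 1 by ring. apply sqrt_1. Qed.

Lemma M2norm_ge_v M v : C2norm v <= 1 -> C2norm (M2app M v) <= M2norm M.
Proof. intros Hv. destruct (M2norm_lub M) as [H _]. apply H. eauto. Qed.

Lemma M2norm_entries M :
  Cmod (m11 M) <= M2norm M /\ Cmod (m12 M) <= M2norm M /\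
  Cmod (m21 M) <= M2norm M /\ Cmod (m22 M) <= M2norm M.
Proof.
  destruct M as [[a b] [c d]]. unfold m11, m12, m21, m22; cbn [fst snd].
  assert (H1 := M2norm_ge_v ((a,b),(c,d)) (C1, C0) (Req_le _ _ C2norm_e1)).
  assert (H2 := M2norm_ge_v ((a,b),(c,d)) (C0, C1) (Req_le _ _ C2norm_e2)).
  unfold M2app in H1, H2; cbn [fst snd] in H1, H2.
  replace (Cadd (Cmul a C1) (Cmul b C0)) with a in H1 by ring.
  replace (Cadd (Cmul c C1) (Cmul d C0)) with c in H1 by ring.
  replace (Cadd (Cmul a C0) (Cmul b C1)) with b in H2 by ring.
  replace (Cadd (Cmul c C0) (Cmul d C1)) with d in H2 by ring.
  pose proof (C2norm_ge_fst (a,c)); pose proof (C2norm_ge_snd (a,c)).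
  pose proof (C2norm_ge_fst (b,d)); pose proof (C2norm_ge_snd (b,d)).
  cbn [fst snd] in *. repeat split; lra.
Qed.

Lemma M2norm_ge0 M : 0 <= M2norm M.
Proof. destruct (M2norm_entries M) as [H _]. pose proof (Cmod_ge0 (m11 M)). lra. Qed.

Lemma m1_le M : m1 M <= 4 * M2norm M.
Proof. destruct (M2norm_entries M) as [? [? [? ?]]]. unfold m1. lra. Qed.

Lemma M2norm_sub_le X Y : M2norm (M2sub X Y) <= 4 * (M2norm X + M2norm Y).
Proof.
  eapply Rle_trans. apply M2norm_le.
  pose proof (m1_le X); pose proof (m1_le Y).
  destruct X as [[a b] [c d]], Y as [[e f] [g h]].
  unfold M2sub, M2add, M2scale, m1, m11, m12, m21, m22 in *; cbn [fst snd] in *.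
  change (1,0) with C1.
  assert (forall x y, Cmod (Cadd x (Cmul (Copp C1) y)) <= Cmod x + Cmod y).
  { intros x y. replace (Cadd x (Cmul (Copp C1) y)) with (Csub x y) by ring. apply Cmod_sub. }
  pose proof (H1 a e); pose proof (H1 b f); pose proof (H1 c g); pose proof (H1 d h). lra.
Qed.

Lemma norm_R (x : R) : @norm R_AbsRing R_NormedModule x = Rabs x.
Proof. reflexivity. Qed.

Lemma Rseries_is u l : infinite_sum u l -> Rseries u = l.
Proof.
  intros H. unfold Rseries.
  assert (H2 : infinite_sum u (epsilon (inhabits 0) (infinite_sum u))) by (apply epsilon_spec; eauto).
  eapply uniqueness_sum; eauto.
Qed.

Lemma Rseries_Series u : ex_series u -> Rseries u = Series u.
Proof. intros H. apply Rseries_is. apply is_series_Reals. apply Series_correct. exact H. Qed.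

Lemma Rseries_ext u v : (forall n, u n = v n) -> Rseries u = Rseries v.
Proof. intros H. f_equal. apply functional_extensionality. exact H. Qed.

Lemma Rseries_lin u v x y : ex_series u -> ex_series v ->
  Rseries (fun n => x * u n + y * v n) = x * Rseries u + y * Rseries v.
Proof.
  intros Hu Hv. rewrite (Rseries_Series u Hu), (Rseries_Series v Hv).
  apply Rseries_is. apply is_series_Reals.
  apply (is_series_plus (fun n => x * u n) (fun n => y * v n)).
  apply (is_series_scal_l x u). apply Series_correct; auto.
  apply (is_series_scal_l y v). apply Series_correct; auto.
Qed.

Section L1.
Variable omega : nat -> R.
Hypothesis Hw : is_weight omega.

Lemma l1_ex a : in_l1w omega a -> ex_series (fun n => Cmod (a n) * omega n).
Proof. intros [l Hl]. exists l. apply is_series_Reals. exact Hl. Qed.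

Lemma l1_norm_Series a : in_l1w omega a -> l1w_norm omega a = Series (fun n => Cmod (a n) * omega n).
Proof. intros H. unfold l1w_norm. apply Rseries_Series. apply l1_ex; auto. Qed.

Lemma l1_term a n : in_l1w omega a -> Cmod (a n) * omega n <= l1w_norm omega a.
Proof.
  intros [l Hl]. unfold l1w_norm. rewrite (Rseries_is _ _ Hl).
  apply Rle_trans with (sum_f_R0 (fun n => Cmod (a n) * omega n) n).
  - destruct n. simpl. lra. simpl.
    assert (0 <= sum_f_R0 (fun n0 : nat => Cmod (a n0) * omega n0) n).
    { apply cond_pos_sum. intros. pose proof (Cmod_ge0 (a n0)); pose proof (Hw n0). nra. }
    lra.
  - apply sum_incr; auto. intros. pose proof (Cmod_ge0 (a n0)); pose proof (Hw n0). nra.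
Qed.

Lemma l1_norm_ge0 a : in_l1w omega a -> 0 <= l1w_norm omega a.
Proof. intros H. pose proof (l1_term a 0 H). pose proof (Cmod_ge0 (a 0%nat)); pose proof (Hw 0%nat). nra. Qed.

Lemma ex_fst a k : in_l1w omega a -> ex_series (fun j => fst (a (k + j)%nat)).
Proof.
  intros H. apply (proj1 (@ex_series_incr_n R_AbsRing R_NormedModule (fun n => fst (a n)) k)).
  apply (@ex_series_le R_AbsRing R_CompleteNormedModule _ (fun n => Cmod (a n) * omega n)); [|apply l1_ex; auto].
  intros n. rewrite norm_R. pose proof (Cmod_fst (a n)). pose proof (Cmod_ge0 (a n)); pose proof (Hw n). nra.
Qed.
Lemma ex_snd a k : in_l1w omega a -> ex_series (fun j => snd (a (k + j)%nat)).
Proof.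
  intros H. apply (proj1 (@ex_series_incr_n R_AbsRing R_NormedModule (fun n => snd (a n)) k)).
  apply (@ex_series_le R_AbsRing R_CompleteNormedModule _ (fun n => Cmod (a n) * omega n)); [|apply l1_ex; auto].
  intros n. rewrite norm_R. pose proof (Cmod_snd (a n)). pose proof (Cmod_ge0 (a n)); pose proof (Hw n). nra.
Qed.

Lemma tail_fst a k : in_l1w omega a -> fst (Ctail a k) = Series (fun j => fst (a (k + j)%nat)).
Proof. intros H. unfold Ctail, Cseries. cbn [fst]. apply Rseries_Series. apply ex_fst; auto. Qed.
Lemma tail_snd a k : in_l1w omega a -> snd (Ctail a k) = Series (fun j => snd (a (k + j)%nat)).
Proof. intros H. unfold Ctail, Cseries. cbn [snd]. apply Rseries_Series. apply ex_snd; auto. Qed.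

Lemma Series_shift1 (u : nat -> R) k : ex_series (fun j => u (k + j)%nat) ->
  Series (fun j => u (k + j)%nat) = u k + Series (fun j => u (S k + j)%nat).
Proof.
  intros H. rewrite Series_incr_1 by auto. rewrite Nat.add_0_r. f_equal.
  apply Series_ext. intros. f_equal. lia.
Qed.

Lemma Ctail_S a k : in_l1w omega a -> Ctail a k = Cadd (a k) (Ctail a (S k)).
Proof.
  intros H. apply injective_projections; unfold Cadd; cbn [fst snd].
  - rewrite !tail_fst by auto. apply (Series_shift1 (fun n => fst (a n))). apply ex_fst; auto.
  - rewrite !tail_snd by auto. apply (Series_shift1 (fun n => snd (a n))). apply ex_snd; auto.
Qed.

Lemma tail_lim0 (u : nat -> R) : ex_series u -> is_lim_seq (fun k => Series (fun j => u (k + j)%nat)) 0.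
Proof.
  intros H. apply is_lim_seq_incr_1.
  apply is_lim_seq_ext with (fun k => Series u - sum_f_R0 u k).
  - intros k. rewrite (Series_incr_n u (S k)) by (auto; lia). simpl pred. ring.
  - replace (Finite 0) with (Finite (Series u - Series u)) by (f_equal; ring).
    apply is_lim_seq_minus'. apply is_lim_seq_const.
    apply is_lim_seq_Reals. apply is_series_Reals. apply Series_correct. auto.
Qed.

Lemma Ctail_lim_fst a : in_l1w omega a -> is_lim_seq (fun k => fst (Ctail a k)) 0.
Proof.
  intros H. apply is_lim_seq_ext with (fun k => Series (fun j => fst (a (k + j)%nat))).
  intros; rewrite tail_fst; auto. apply (tail_lim0 (fun n => fst (a n))). apply (ex_fst a 0 H).
Qed.
Lemma Ctail_lim_snd a : in_l1w omega a -> is_lim_seq (fun k => snd (Ctail a k)) 0.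
Proof.
  intros H. apply is_lim_seq_ext with (fun k => Series (fun j => snd (a (k + j)%nat))).
  intros; rewrite tail_snd; auto. apply (tail_lim0 (fun n => snd (a n))). apply (ex_snd a 0 H).
Qed.

Lemma telescope (p : nat -> R) k : is_lim_seq p 0 ->
  infinite_sum (fun j => p (k + j)%nat - p (S (k + j))) (p k).
Proof.
  intros H.
  assert (Hs : forall n, sum_f_R0 (fun j => p (k + j)%nat - p (S (k + j))) n = p k - p (S (k + n))).
  { induction n. simpl. rewrite Nat.add_0_r. ring. simpl. rewrite IHn. rewrite <- plus_n_Sm. ring. }
  apply is_lim_seq_Reals.
  apply is_lim_seq_ext with (fun n => p k - p (S (k + n))). intros; rewrite Hs; auto.
  replace (Finite (p k)) with (Finite (p k - 0)) by (f_equal; ring).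
  apply is_lim_seq_minus'. apply is_lim_seq_const.
  apply (is_lim_seq_incr_n _ (S k)) in H.
  apply is_lim_seq_ext with (fun n => p (n + S k)%nat). intros; f_equal; lia. exact H.
Qed.

Lemma Ctail_mul x y k : in_l1w omega x -> in_l1w omega y ->
  Ctail (conv_min x y) k = Cmul (Ctail x k) (Ctail y k).
Proof.
  intros Hx Hy.
  assert (Hc : forall n, conv_min x y n = Csub (Cmul (Ctail x n) (Ctail y n)) (Cmul (Ctail x (S n)) (Ctail y (S n)))).
  { intros n. unfold conv_min. rewrite (Ctail_S x n Hx), (Ctail_S y n Hy). ring. }
  set (P := fun n => Cmul (Ctail x n) (Ctail y n)).
  assert (HP1 : is_lim_seq (fun n => fst (P n)) 0).
  { unfold P, Cmul; cbn [fst]. replace (Finite 0) with (Finite (0*0 - 0*0)) by (f_equal; ring).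
    apply is_lim_seq_minus'; apply is_lim_seq_mult'; auto using Ctail_lim_fst, Ctail_lim_snd. }
  assert (HP2 : is_lim_seq (fun n => snd (P n)) 0).
  { unfold P, Cmul; cbn [snd]. replace (Finite 0) with (Finite (0*0 + 0*0)) by (f_equal; ring).
    apply is_lim_seq_plus'; apply is_lim_seq_mult'; auto using Ctail_lim_fst, Ctail_lim_snd. }
  apply injective_projections.
  - unfold Ctail at 1, Cseries; cbn [fst].
    rewrite (Rseries_ext _ (fun j => fst (P (k + j)%nat) - fst (P (S (k + j))))).
    apply Rseries_is. apply (telescope (fun n => fst (P n))). auto.
    intros j. rewrite Hc. unfold P, Csub, Cadd, Copp. cbn [fst snd]. ring.
  - unfold Ctail at 1, Cseries; cbn [snd].
    rewrite (Rseries_ext _ (fun j => snd (P (k + j)%nat) - snd (P (S (k + j))))).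
    apply Rseries_is. apply (telescope (fun n => snd (P n))). auto.
    intros j. rewrite Hc. unfold P, Csub, Cadd, Copp. cbn [fst snd]. ring.
Qed.

Lemma Ctail_add a b k : in_l1w omega a -> in_l1w omega b ->
  Ctail (seq_add a b) k = Cadd (Ctail a k) (Ctail b k).
Proof.
  intros Ha Hb. apply injective_projections; unfold Ctail, Cseries, seq_add, Cadd; cbn [fst snd].
  - rewrite (Rseries_ext (fun j => fst (a (k+j)%nat) + fst (b (k+j)%nat)) (fun j => 1 * fst (a (k+j)%nat) + 1 * fst (b (k+j)%nat))) by (intros; ring).
    rewrite Rseries_lin by (apply ex_fst; auto). ring.
  - rewrite (Rseries_ext (fun j => snd (a (k+j)%nat) + snd (b (k+j)%nat)) (fun j => 1 * snd (a (k+j)%nat) + 1 * snd (b (k+j)%nat))) by (intros; ring).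
    rewrite Rseries_lin by (apply ex_snd; auto). ring.
Qed.

Lemma Ctail_scale c a k : in_l1w omega a ->
  Ctail (seq_scale c a) k = Cmul c (Ctail a k).
Proof.
  intros Ha. apply injective_projections; unfold Ctail, Cseries, seq_scale, Cmul; cbn [fst snd].
  - rewrite (Rseries_ext (fun j => fst c * fst (a (k+j)%nat) - snd c * snd (a (k+j)%nat)) (fun j => fst c * fst (a (k+j)%nat) + (- snd c) * snd (a (k+j)%nat))) by (intros; ring).
    rewrite Rseries_lin by first [apply ex_fst; auto | apply ex_snd; auto]. ring.
  -     rewrite Rseries_lin by first [apply ex_fst; auto | apply ex_snd; auto]. ring.
Qed.

Lemma Series_tail_le (w : nat -> R) k : (forall n, 0 <= w n) -> ex_series w ->
  Series (fun j => w (k + j)%nat) <= Series w.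
Proof.
  intros Hp H. destruct k.
  - right. apply Series_ext. intros; reflexivity.
  - rewrite (Series_incr_n w (S k)) by (auto; lia). pose proof (cond_pos_sum w (pred (S k)) Hp). lra.
Qed.

Lemma tail_comp_bound (u : nat -> R) a k : in_l1w omega a -> (forall n, Rabs (u n) <= Cmod (a n)) ->
  ex_series (fun j => u (k + j)%nat) ->
  Rabs (Series (fun j => u (k + j)%nat)) <= l1w_norm omega a.
Proof.
  intros Ha Hu Hex.
  assert (Hw' : forall n, 0 <= Cmod (a n) * omega n) by (intros; pose proof (Cmod_ge0 (a n)); pose proof (Hw n); nra).
  assert (Hex2 : ex_series (fun j => Cmod (a (k + j)%nat) * omega (k + j)%nat)).
  { apply (proj1 (ex_series_incr_n (fun n => Cmod (a n) * omega n) k)). apply l1_ex; auto. }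
  assert (Hle : forall j, Rabs (u (k + j)%nat) <= Cmod (a (k + j)%nat) * omega (k + j)%nat).
  { intros j. pose proof (Hu (k+j)%nat). pose proof (Cmod_ge0 (a (k+j)%nat)); pose proof (Hw (k+j)%nat). nra. }
  assert (Hex3 : ex_series (fun j => Rabs (u (k + j)%nat))).
  { apply (@ex_series_le R_AbsRing R_CompleteNormedModule _ _ ) with (2 := Hex2).
    intros j. rewrite norm_R, Rabs_Rabsolu. apply Hle. }
  eapply Rle_trans. apply Series_Rabs; auto.
  eapply Rle_trans. apply Series_le; [|exact Hex2]. intros j; split; [apply Rabs_pos| apply Hle].
  rewrite l1_norm_Series by auto.
  apply (Series_tail_le (fun n => Cmod (a n) * omega n)); auto. apply l1_ex; auto.
Qed.

Lemma Ctail_bound a k : in_l1w omega a -> Cmod (Ctail a k) <= 2 * l1w_norm omega a.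
Proof.
  intros Ha. eapply Rle_trans. apply Cmod_le_comp.
  rewrite tail_fst, tail_snd by auto.
  pose proof (tail_comp_bound (fun n => fst (a n)) a k Ha (fun n => Cmod_fst (a n)) (ex_fst a k Ha)).
  pose proof (tail_comp_bound (fun n => snd (a n)) a k Ha (fun n => Cmod_snd (a n)) (ex_snd a k Ha)).
  cbn beta in *. lra.
Qed.
End L1.

Lemma single_sum (u : nat -> R) n : (forall k, k <> n -> u k = 0) -> infinite_sum u (u n).
Proof.
  intros H.
  assert (Hs : forall m, sum_f_R0 u m = if Nat.leb n m then u n else 0).
  { induction m.
    - destruct n; simpl; [reflexivity | apply H; lia].
    - cbn [sum_f_R0]. rewrite IHm. destruct (Nat.leb_spec n m), (Nat.leb_spec n (S m)); try lia.
      + rewrite (H (S m)) by lia. ring.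
      + assert (n = S m) by lia. subst. ring.
      + rewrite (H (S m)) by lia. ring. }
  intros eps Heps. exists n. intros m Hm. rewrite Hs.
  destruct (Nat.leb_spec n m); try lia. unfold R_dist. rewrite Rminus_diag, Rabs_R0. auto.
Qed.

Definition dlt (n : nat) : nat -> C := fun k => if Nat.eqb k n then C1 else C0.

Lemma Rseries_single (u : nat -> R) n : (forall k, k <> n -> u k = 0) -> Rseries u = u n.
Proof. intros H. apply Rseries_is. apply single_sum. exact H. Qed.

Lemma Ctail_dlt n k : Ctail (dlt n) k = if Nat.leb k n then C1 else C0.
Proof.
  unfold Ctail, Cseries. destruct (Nat.leb_spec k n).
  - unfold C1. f_equal.
    + rewrite (Rseries_single _ (n - k)). unfold dlt. replace (k + (n - k))%nat with n by lia.
      rewrite Nat.eqb_refl. reflexivity.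
      intros j Hj. unfold dlt. destruct (Nat.eqb_spec (k + j) n); try lia. reflexivity.
    + rewrite (Rseries_single _ (n - k)). unfold dlt. replace (k + (n - k))%nat with n by lia.
      rewrite Nat.eqb_refl. reflexivity.
      intros j Hj. unfold dlt. destruct (Nat.eqb_spec (k + j) n); try lia. reflexivity.
  - unfold C0. f_equal.
    + rewrite (Rseries_single _ 0). unfold dlt.
      destruct (Nat.eqb_spec (k + 0) n); try lia. reflexivity.
      intros j Hj. unfold dlt. destruct (Nat.eqb_spec (k + j) n); try lia. reflexivity.
    + rewrite (Rseries_single _ 0). unfold dlt.
      destruct (Nat.eqb_spec (k + 0) n); try lia. reflexivity.
      intros j Hj. unfold dlt. destruct (Nat.eqb_spec (k + j) n); try lia. reflexivity.
Qed.

Lemma conv_dlt m n : conv_min (dlt m) (dlt n) = dlt (Nat.min m n).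
Proof.
  apply functional_extensionality. intros k. unfold conv_min. rewrite !Ctail_dlt. unfold dlt.
  destruct (Nat.eqb_spec k m), (Nat.eqb_spec k n), (Nat.leb_spec k n), (Nat.leb_spec (S k) m),
    (Nat.eqb_spec k (Nat.min m n)); try lia; ring.
Qed.

Definition sdlt (r : R) (n : nat) : nat -> C := seq_scale (rc r) (dlt n).

Section W.
Variable omega : nat -> R.
Hypothesis Hw : is_weight omega.

Lemma sdlt_l1 r n : in_l1w omega (sdlt r n) /\ l1w_norm omega (sdlt r n) = Rabs r * omega n.
Proof.
  assert (Hz : forall k, k <> n -> Cmod (sdlt r n k) * omega k = 0).
  { intros k Hk. unfold sdlt, seq_scale, dlt. destruct (Nat.eqb_spec k n); try lia.
    replace (Cmul (rc r) C0) with C0 by ring. rewrite Cmod_C0. ring. }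
  assert (Hn : Cmod (sdlt r n n) * omega n = Rabs r * omega n).
  { unfold sdlt, seq_scale, dlt. rewrite Nat.eqb_refl. replace (Cmul (rc r) C1) with (rc r) by ring.
    rewrite Cmod_rc. auto. }
  pose proof (single_sum _ n Hz) as HS. cbv beta in HS. rewrite Hn in HS. split.
  - exists (Rabs r * omega n). exact HS.
  - unfold l1w_norm. apply Rseries_is. exact HS.
Qed.

Lemma dlt_sdlt n : dlt n = sdlt 1 n.
Proof. apply functional_extensionality. intros k. unfold sdlt, seq_scale. change (rc 1) with C1. ring. Qed.

Lemma dlt_l1 n : in_l1w omega (dlt n).
Proof. rewrite dlt_sdlt. apply sdlt_l1. Qed.
End W.

Lemma key_alg a b cc f g h :
  Cadd (Cmul a f) (Cmul b h) = b ->
  Cadd (Cmul g a) (Cmul h cc) = cc ->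
  Cadd (Cmul g f) (Cmul h h) = h ->
  Cadd (Cmul a a) (Cmul b cc) = a ->
  Cmul (Cmul (Cmul a a) a) (Cmul f (Csub f b)) = C0.
Proof.
  intros H1 H2 H3 H4.
  set (u := Csub C1 h).
  set (r1 := Csub (Cadd (Cmul a f) (Cmul b h)) b).
  set (r2 := Csub (Cadd (Cmul g a) (Cmul h cc)) cc).
  set (r3 := Csub (Cadd (Cmul g f) (Cmul h h)) h).
  set (r4 := Csub (Cadd (Cmul a a) (Cmul b cc)) a).
  transitivity (Cadd (Cmul (Cmul b b) (Csub (Csub (Csub (Csub (Cmul (Cmul a a) r3) (Cmul r4 (Cmul u u))) (Cmul (Cmul cc u) r1)) (Cmul (Cmul b u) r2)) (Cmul r1 r2)))
                     (Cmul r1 (Csub (Cadd (Cmul (Cmul (Cadd C1 C1) (Cmul a b)) u) (Cmul a r1)) (Cmul (Cmul a a) b)))).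
  - unfold u, r1, r2, r3, r4. ring.
  - assert (E1 : r1 = C0) by (unfold r1; rewrite H1; ring).
    assert (E2 : r2 = C0) by (unfold r2; rewrite H2; ring).
    assert (E3 : r3 = C0) by (unfold r3; rewrite H3; ring).
    assert (E4 : r4 = C0) by (unfold r4; rewrite H4; ring).
    rewrite E1, E2, E3, E4. ring.
Qed.

Ltac m2_ring :=
  unfold M2sub, M2mul in *; unfold M2add, M2scale, M2zero in *; change (1,0) with C1 in *;
  apply injective_projections; cbn [fst snd];
  (apply injective_projections; cbn [fst snd]; ring).

Section T.
Variable W : R.
Let w := rc W.
Definition Qm : M2 := ((C1, w), (C0, C0)).
Definition Am : M2 := ((C1, Cadd w w), (C0, Copp C1)).
Definition Im : M2 := ((C1, C0), (C0, C1)).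
Definition Tmat (al be ga : C) : M2 :=
  M2add (M2add (M2scale al Qm) (M2scale be Am)) (M2scale ga Im).
Definition Dm : M2 := ((C0, Cadd w w), (C0, Copp (Cadd C1 C1))).

Lemma Tmat_defect p0 pN pN1 q0 qN qN1 :
  M2sub (Tmat (Csub (Cmul p0 q0) (Cmul pN qN)) (Csub (Cmul pN qN) (Cmul pN1 qN1)) (Cmul pN1 qN1))
        (M2mul (Tmat (Csub p0 pN) (Csub pN pN1) pN1) (Tmat (Csub q0 qN) (Csub qN qN1) qN1))
  = M2scale (Cmul (Csub pN pN1) (Csub qN qN1)) Dm.
Proof. unfold Tmat, Qm, Am, Im, Dm. m2_ring. Qed.

Lemma Tmat_add a1 b1 c1 a2 b2 c2 :
  Tmat (Cadd a1 a2) (Cadd b1 b2) (Cadd c1 c2) = M2add (Tmat a1 b1 c1) (Tmat a2 b2 c2).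
Proof. unfold Tmat, Qm, Am, Im. m2_ring. Qed.

Lemma Tmat_scale k a1 b1 c1 :
  Tmat (Cmul k a1) (Cmul k b1) (Cmul k c1) = M2scale k (Tmat a1 b1 c1).
Proof. unfold Tmat, Qm, Am, Im. m2_ring. Qed.

Lemma Tmat_Q : Tmat C1 C0 C0 = Qm.
Proof. unfold Tmat, Qm, Am, Im. m2_ring. Qed.
Lemma Tmat_A : Tmat C0 C1 C0 = Am.
Proof. unfold Tmat, Qm, Am, Im. m2_ring. Qed.

Lemma cmod3 a b c u v t :
  Cmod (Cadd (Cadd (Cmul a u) (Cmul b v)) (Cmul c t)) <= (Cmod a + Cmod b + Cmod c) * (Cmod u + Cmod v + Cmod t).
Proof.
  eapply Rle_trans. apply Cmod_add. pose proof (Cmod_add (Cmul a u) (Cmul b v)).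
  rewrite !Cmod_mul in *.
  pose proof (Cmod_ge0 a); pose proof (Cmod_ge0 b); pose proof (Cmod_ge0 c);
  pose proof (Cmod_ge0 u); pose proof (Cmod_ge0 v); pose proof (Cmod_ge0 t). nra.
Qed.

Hypothesis HW : 1 <= W.

Lemma Cmod_w : Cmod w = W.
Proof. unfold w. rewrite Cmod_rc. apply Rabs_right. lra. Qed.
Lemma Cmod_ww : Cmod (Cadd w w) <= 2 * W.
Proof. pose proof (Cmod_add w w). rewrite Cmod_w in H. lra. Qed.

Lemma Tmat_bound al be ga : m1 (Tmat al be ga) <= (Cmod al + Cmod be + Cmod ga) * (12 * W).
Proof.
  pose proof (Cmod_ge0 al); pose proof (Cmod_ge0 be); pose proof (Cmod_ge0 ga).
  unfold m1, m11, m12, m21, m22, Tmat, Qm, Am, Im, M2add, M2scale. cbn [fst snd].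
  pose proof (cmod3 al be ga C1 C1 C1). pose proof (cmod3 al be ga w (Cadd w w) C0).
  pose proof (cmod3 al be ga C0 C0 C0). pose proof (cmod3 al be ga C0 (Copp C1) C1).
  rewrite Cmod_opp, Cmod_C1, Cmod_C0, Cmod_w in *. pose proof Cmod_ww.
  set (s := Cmod al + Cmod be + Cmod ga) in *.
  assert (0 <= s) by (unfold s; lra).
  assert (s * (W + Cmod (Cadd w w) + 0) <= s * (3 * W)) by (apply Rmult_le_compat_l; lra).
  assert (s * (1+1+1) <= s * (3 * W)) by (apply Rmult_le_compat_l; lra).
  assert (s * (0+1+1) <= s * (3 * W)) by (apply Rmult_le_compat_l; lra).
  assert (s * (0+0+0) <= s * (3 * W)) by (apply Rmult_le_compat_l; lra).
  lra.
Qed.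

Lemma Dm_bound k : m1 (M2scale k Dm) <= Cmod k * (4 * W).
Proof.
  unfold m1, m11, m12, m21, m22, M2scale, Dm. cbn [fst snd]. rewrite !Cmod_mul.
  rewrite Cmod_opp, Cmod_C0. pose proof (Cmod_add C1 C1). rewrite Cmod_C1 in H.
  pose proof Cmod_ww. pose proof (Cmod_ge0 k). pose proof (Cmod_ge0 (Cadd C1 C1)). nra.
Qed.
End T.

Lemma M2sub_scale k X Y : M2sub (M2scale k X) (M2scale k Y) = M2scale k (M2sub X Y).
Proof. destruct X as [[? ?] [? ?]], Y as [[? ?] [? ?]]. m2_ring. Qed.

Lemma Cmod_csub0 z : Cmod (Csub z C0) = Cmod z.
Proof. replace (Csub z C0) with z by ring. reflexivity. Qed.

Lemma ent_bound k X Y : M2norm (M2scale k (M2sub X Y)) >= 0 /\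
  Cmod (Cmul k (Csub (m11 X) (m11 Y))) <= M2norm (M2scale k (M2sub X Y)) /\
  Cmod (Cmul k (Csub (m12 X) (m12 Y))) <= M2norm (M2scale k (M2sub X Y)).
Proof.
  destruct (M2norm_entries (M2scale k (M2sub X Y))) as [H1 [H2 _]].
  pose proof (M2norm_ge0 (M2scale k (M2sub X Y))).
  assert (E1 : m11 (M2scale k (M2sub X Y)) = Cmul k (Csub (m11 X) (m11 Y))).
  { destruct X as [[? ?] [? ?]], Y as [[? ?] [? ?]]. unfold m11, M2sub; unfold M2scale, M2add; cbn [fst snd].
    change (1,0) with C1. ring. }
  assert (E2 : m12 (M2scale k (M2sub X Y)) = Cmul k (Csub (m12 X) (m12 Y))).
  { destruct X as [[? ?] [? ?]], Y as [[? ?] [? ?]]. unfold m12, M2sub; unfold M2scale, M2add; cbn [fst snd].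
    change (1,0) with C1. ring. }
  rewrite E1 in H1. rewrite E2 in H2. repeat split; lra.
Qed.

Section Main.
Variable omega : nat -> R.
Hypothesis Hw : is_weight omega.
Variable N : nat.
Hypothesis HN : (0 < N)%nat.
Hypothesis Hc : omega 0%nat <= omega N.

Definition Tm (a : nat -> C) : M2 :=
  Tmat (omega N) (Csub (Ctail a 0) (Ctail a N)) (Csub (Ctail a N) (Ctail a (S N))) (Ctail a (S N)).

Lemma HW1 : 1 <= omega N.
Proof. apply Hw. Qed.

Lemma Tm_bl : bounded_linear omega Tm.
Proof.
  split; [|split].
  - intros a b Ha Hb. unfold Tm. rewrite !(Ctail_add omega Hw) by auto.
    rewrite <- Tmat_add. f_equal; ring.
  - intros c a Ha. unfold Tm. rewrite !(Ctail_scale omega Hw) by auto.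
    rewrite <- Tmat_scale. f_equal; ring.
  - exists (10 * (12 * omega N)). intros a Ha.
    eapply Rle_trans. apply M2norm_le. eapply Rle_trans. apply Tmat_bound. apply HW1.
    pose proof (Ctail_bound omega Hw a 0 Ha); pose proof (Ctail_bound omega Hw a N Ha);
    pose proof (Ctail_bound omega Hw a (S N) Ha).
    pose proof (Cmod_sub (Ctail a 0) (Ctail a N)); pose proof (Cmod_sub (Ctail a N) (Ctail a (S N))).
    pose proof HW1.
    assert (Cmod (Csub (Ctail a 0) (Ctail a N)) + Cmod (Csub (Ctail a N) (Ctail a (S N))) + Cmod (Ctail a (S N)) <= 10 * l1w_norm omega a) by lra.
    assert (0 <= Cmod (Csub (Ctail a 0) (Ctail a N)) + Cmod (Csub (Ctail a N) (Ctail a (S N))) + Cmod (Ctail a (S N))).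
    { pose proof (Cmod_ge0 (Csub (Ctail a 0) (Ctail a N))); pose proof (Cmod_ge0 (Csub (Ctail a N) (Ctail a (S N))));
      pose proof (Cmod_ge0 (Ctail a (S N))). lra. }
    nra.
Qed.

Lemma Tm_def1 x y : in_l1w omega x -> in_l1w omega y -> l1w_norm omega x <= 1 -> l1w_norm omega y <= 1 ->
  M2norm (M2sub (Tm (conv_min x y)) (M2mul (Tm x) (Tm y))) <= 4 / omega N.
Proof.
  intros Hx Hy Hnx Hny. unfold Tm. rewrite !(Ctail_mul omega Hw) by auto.
  rewrite Tmat_defect. eapply Rle_trans. apply M2norm_le. eapply Rle_trans. apply Dm_bound. apply HW1.
  assert (Ex : Csub (Ctail x N) (Ctail x (S N)) = x N) by (rewrite (Ctail_S omega Hw x N Hx); ring).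
  assert (Ey : Csub (Ctail y N) (Ctail y (S N)) = y N) by (rewrite (Ctail_S omega Hw y N Hy); ring).
  rewrite Ex, Ey, Cmod_mul.
  pose proof (l1_term omega Hw x N Hx); pose proof (l1_term omega Hw y N Hy).
  pose proof HW1. pose proof (Cmod_ge0 (x N)); pose proof (Cmod_ge0 (y N)).
  set (W := omega N) in *. set (u := Cmod (x N)) in *. set (v := Cmod (y N)) in *.
  assert (u <= / W). { apply (Rmult_le_reg_r W). lra. rewrite Rinv_l by lra. lra. }
  assert (v <= / W). { apply (Rmult_le_reg_r W). lra. rewrite Rinv_l by lra. lra. }
  assert (u * v <= /W * /W) by (apply Rmult_le_compat; lra).
  replace (4 / W) with (/W * /W * (4 * W)) by (field; lra).
  apply Rmult_le_compat_r; lra.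
Qed.

Lemma Tm_defect : defect omega Tm <= 4 / omega N.
Proof.
  apply Rsup_le.
  - destruct (sdlt_l1 omega 0 0%nat) as [H0 Hn0]. exists (M2norm (M2sub (Tm (conv_min (sdlt 0 0) (sdlt 0 0))) (M2mul (Tm (sdlt 0 0)) (Tm (sdlt 0 0))))).
    exists (sdlt 0 0), (sdlt 0 0). rewrite Rabs_R0, Rmult_0_l in Hn0. repeat split; auto; lra.
  - intros r [x [y [Hx [Hy [Hnx [Hny ->]]]]]]. apply Tm_def1; auto.
Qed.

Lemma Tm_dlt0 : Tm (dlt 0) = Qm (omega N).
Proof.
  unfold Tm. rewrite !Ctail_dlt. destruct (Nat.leb_spec 0 0), (Nat.leb_spec N 0), (Nat.leb_spec (S N) 0); try lia.
  rewrite <- Tmat_Q. f_equal; ring.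
Qed.
Lemma Tm_dltN : Tm (dlt N) = Am (omega N).
Proof.
  unfold Tm. rewrite !Ctail_dlt. destruct (Nat.leb_spec 0 N), (Nat.leb_spec N N), (Nat.leb_spec (S N) N); try lia.
  rewrite <- Tmat_A. f_equal; ring.
Qed.

End Main.

Section Dist.
Variable omega : nat -> R.
Hypothesis Hw : is_weight omega.
Variable N : nat.
Hypothesis HN : (0 < N)%nat.
Hypothesis Hc : omega 0%nat <= omega N.

Lemma dist_lb S : is_mult omega S ->
  / (2 * omega 0%nat) <= opnorm omega (fun a => M2sub (Tm omega N a) (S a)).
Proof.
  intros [[Sadd [Sscale [KS HKS]]] Smul].
  destruct (Tm_bl omega Hw N) as [Tadd [Tscale [KT HKT]]].
  set (c := omega 0%nat) in *. set (W := omega N) in *.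
  assert (Hc1 : 1 <= c) by apply Hw. assert (HW1 : 1 <= W) by apply Hw.
  set (r := opnorm omega (fun a => M2sub (Tm omega N a) (S a))).
  set (E := fun r0 => exists a, in_l1w omega a /\ l1w_norm omega a <= 1 /\
                                r0 = M2norm (M2sub (Tm omega N a) (S a))).
  assert (Hb : bound E).
  { exists (4 * (Rabs KT + Rabs KS)). intros r0 [a [Ha [Hn ->]]].
    eapply Rle_trans. apply M2norm_sub_le.
    pose proof (HKT a Ha); pose proof (HKS a Ha); pose proof (l1_norm_ge0 omega Hw a Ha).
    pose proof (Rle_abs KT); pose proof (Rabs_pos KT); pose proof (Rle_abs KS); pose proof (Rabs_pos KS).
    assert (KT * l1w_norm omega a <= Rabs KT) by nra.
    assert (KS * l1w_norm omega a <= Rabs KS) by nra. lra. }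
  assert (Hte : forall n t, 0 < t -> t * omega n = 1 ->
            forall i, (i = 0 \/ i = 1)%nat ->
            t * Cmod (Csub ((if Nat.eqb i 0 then m11 else m12) (Tm omega N (dlt n)))
                           ((if Nat.eqb i 0 then m11 else m12) (S (dlt n)))) <= r).
  { intros n t Ht Htn i Hi.
    destruct (sdlt_l1 omega t n) as [Hl Hln].
    assert (Hle : M2norm (M2sub (Tm omega N (sdlt t n)) (S (sdlt t n))) <= r).
    { apply Rsup_ge; auto. exists (sdlt t n). repeat split; auto. rewrite Hln, Rabs_right by lra. lra. }
    unfold sdlt in Hle. rewrite Tscale, Sscale in Hle by (apply dlt_l1; auto).
    rewrite M2sub_scale in Hle.
    destruct (ent_bound (rc t) (Tm omega N (dlt n)) (S (dlt n))) as [_ [H1 H2]].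
    rewrite Cmod_mul, Cmod_rc, Rabs_right in H1, H2 by lra.
    destruct Hi as [-> | ->]; simpl; lra. }
  assert (Ht0 : 0 < / c) by (apply Rinv_0_lt_compat; lra).
  assert (HtN : 0 < / W) by (apply Rinv_0_lt_compat; lra).
  pose proof (Hte 0%nat (/c) Ht0 (Rinv_l c ltac:(lra)) 0%nat (or_introl eq_refl)) as B11.
  pose proof (Hte 0%nat (/c) Ht0 (Rinv_l c ltac:(lra)) 1%nat (or_intror eq_refl)) as B12.
  pose proof (Hte N (/W) HtN (Rinv_l W ltac:(lra)) 1%nat (or_intror eq_refl)) as BN12.
  simpl in B11, B12, BN12.
  rewrite Tm_dlt0 in B11, B12 by auto. rewrite Tm_dltN in BN12 by auto. fold W in B11, B12, BN12.
  pose proof (Smul (dlt 0) (dlt N) (dlt_l1 omega 0) (dlt_l1 omega N)) as R01.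
  pose proof (Smul (dlt N) (dlt 0) (dlt_l1 omega N) (dlt_l1 omega 0)) as R10.
  pose proof (Smul (dlt N) (dlt N) (dlt_l1 omega N) (dlt_l1 omega N)) as RNN.
  pose proof (Smul (dlt 0) (dlt 0) (dlt_l1 omega 0) (dlt_l1 omega 0)) as R00.
  rewrite conv_dlt in R01, R10, RNN, R00.
  replace (Nat.min 0 N) with 0%nat in R01 by lia.
  replace (Nat.min N 0) with 0%nat in R10 by lia.
  replace (Nat.min N N) with N in RNN by lia.
  replace (Nat.min 0 0) with 0%nat in R00 by lia.
  destruct (S (dlt 0%nat)) as [[a b] [cc d]].
  destruct (S (dlt N)) as [[e f] [g h]].
  apply (f_equal m12) in R01. apply (f_equal m21) in R10.
  apply (f_equal m22) in RNN. apply (f_equal m11) in R00.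
  unfold M2mul, m11, m12, m21, m22 in R01, R10, RNN, R00. cbn [fst snd] in R01, R10, RNN, R00.
  unfold Qm, Am, m11, m12 in B11, B12, BN12. cbn [fst snd] in B11, B12, BN12.
  pose proof (key_alg a b cc f g h (eq_sym R01) (eq_sym R10) (eq_sym RNN) (eq_sym R00)) as K.
  apply (f_equal Cmod) in K. rewrite !Cmod_mul, Cmod_C0 in K.
  destruct (Rlt_dec r (/ (2 * c))) as [Hlt|Hge]; [|lra].
  exfalso.
  assert (Hrc : r * c < / 2).
  { apply Rlt_le_trans with (/ (2 * c) * c). apply Rmult_lt_compat_r; lra.
    right. field. lra. }
  assert (Hr0 : 0 <= r). { pose proof (Cmod_ge0 (Csub C1 a)). nra. }
  assert (H11 : Cmod (Csub C1 a) <= r * c).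
  { apply (Rmult_le_reg_l (/c)); auto. replace (/ c * (r * c)) with r by (field; lra). lra. }
  assert (H12 : Cmod (Csub (rc W) b) <= r * c).
  { apply (Rmult_le_reg_l (/c)); auto. replace (/ c * (r * c)) with r by (field; lra). lra. }
  assert (HN12 : Cmod (Csub (Cadd (rc W) (rc W)) f) <= r * W).
  { apply (Rmult_le_reg_l (/W)); auto. replace (/ W * (r * W)) with r by (field; lra). lra. }
  assert (Ha : 1 / 2 <= Cmod a).
  { pose proof (Cmod_tri C1 a C0). rewrite !Cmod_csub0, Cmod_C1 in H. lra. }
  pose proof (Cmod_ge0 a) as Ha0.
  assert (Ha3 : 0 < Cmod a * Cmod a * Cmod a) by (repeat apply Rmult_lt_0_compat; lra).
  assert (Hww : Cmod (Cadd (rc W) (rc W)) = 2 * W).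
  { replace (Cadd (rc W) (rc W)) with (rc (2 * W)) by (unfold rc, Cadd; cbn [fst snd]; f_equal; ring).
    rewrite Cmod_rc. apply Rabs_right. lra. }
  destruct (Rmult_integral _ _ K) as [K1|K1]; [lra|].
  destruct (Rmult_integral _ _ K1) as [K2|K2].
  - pose proof (Cmod_tri (Cadd (rc W) (rc W)) f C0). rewrite !Cmod_csub0, Hww, K2 in H.
    assert (r * W < W / 2).
    { apply Rle_lt_trans with (r * (W * c)). apply Rmult_le_compat_l; nra.
      replace (r * (W * c)) with ((r * c) * W) by ring. replace (W / 2) with (/2 * W) by field.
      apply Rmult_lt_compat_r; lra. }
    lra.
  - pose proof (Cmod_tri (Cadd (rc W) (rc W)) f b).
    pose proof (Cmod_tri (Cadd (rc W) (rc W)) b (rc W)).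
    replace (Csub (Cadd (rc W) (rc W)) (rc W)) with (rc W) in H0 by ring.
    rewrite Cmod_rc, Rabs_right in H0 by lra. rewrite Cmod_sym in H12.
    assert (r * W < W / 2).
    { apply Rle_lt_trans with (r * (W * c)). apply Rmult_le_compat_l; nra.
      replace (r * (W * c)) with ((r * c) * W) by ring. replace (W / 2) with (/2 * W) by field.
      apply Rmult_lt_compat_r; lra. }
    assert (r * c <= r * W) by (apply Rmult_le_compat_l; lra).
    lra.
Qed.
End Dist.

Lemma zero_mult omega : is_mult omega (fun _ => M2zero).
Proof.
  assert (Hm : M2norm M2zero <= 0).
  { eapply Rle_trans. apply M2norm_le. unfold m1, m11, m12, m21, m22, M2zero; cbn [fst snd].
    rewrite Cmod_C0. lra. }
  split; [split; [|split]|].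
  - intros. unfold M2zero. m2_ring.
  - intros. unfold M2zero. m2_ring.
  - exists 0. intros. rewrite Rmult_0_l. exact Hm.
  - intros. unfold M2zero. m2_ring.
Qed.

Theorem theoremt (omega : nat -> R) (Hw : is_weight omega) (Hunb : unbounded omega) :
  ~ uniformly_AMNM omega.
Proof.
  intros H.
  assert (Hc1 : 1 <= omega 0%nat) by apply Hw.
  destruct (H (/ (4 * omega 0%nat))) as [delta [Hd H']].
  { apply Rinv_0_lt_compat. lra. }
  destruct (Hunb (omega 0%nat + 4 / delta + 1)) as [N HN].
  assert (Hdp : 0 < 4 / delta) by (apply Rdiv_lt_0_compat; lra).
  assert (HN0 : (0 < N)%nat).
  { destruct N; [|lia]. lra. }
  assert (Hc : omega 0%nat <= omega N) by lra.
  assert (HW1 : 1 <= omega N) by apply Hw.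
  assert (Hdef : defect omega (Tm omega N) <= delta).
  { eapply Rle_trans. apply Tm_defect; auto.
    apply (Rmult_le_reg_r (omega N)). lra.
    replace (4 / omega N * omega N) with 4 by (field; lra).
    assert (4 / delta < omega N) by lra.
    apply (Rmult_lt_compat_l delta) in H0; [|lra].
    replace (delta * (4 / delta)) with 4 in H0 by (field; lra). lra. }
  specialize (H' (Tm omega N) (Tm_bl omega Hw N) Hdef).
  assert (Hlb : / (2 * omega 0%nat) <= dist_mult omega (Tm omega N)).
  { apply Rinf_ge.
    - eexists. exists (fun _ => M2zero). split. apply zero_mult. reflexivity.
    - intros r [S [HS ->]]. apply dist_lb; auto. }
  assert (/ (4 * omega 0%nat) < / (2 * omega 0%nat)).
  { apply Rinv_lt_contravar; nra. }
  lra.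
Qed.
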